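(* Let $Z\in\mathbb R^{n\times d}$ ($d\ge n$) with $ZZ^\top$ nonsingular, let $\Sigma$ be symmetric with eigenvalues in $[1/\kappa,1]$, $X=Z\Sigma^{1/2}$, $\sigma>0$, and let $\rho\ge0$ satisfy $I-\frac\rho dZ^\top Z\succ0$. Then $$\mathcal P(A(\rho,\Sigma);\Sigma)-\mathcal P(A(0,\Sigma);\Sigma)\ge\frac{\rho^2\sigma^4}{d}\mathrm{Tr}\Big(\big(I-\tfrac\rho dZZ^\top\big)^{-2}\tfrac{ZZ^\top}{d}\big(\tfrac{ZZ^\top}{d}+\sigma^2I\big)^{-1}\Big),$$ $$\mathcal T(A(\rho,\Sigma);\Sigma)-\mathcal T(A(0,\Sigma);\Sigma)\le\frac{\kappa\sigma^4}{n}\mathrm{Tr}\Big(\big((I-\tfrac\rho dZZ^\top)^{-2}-I\big)\big(\tfrac1dZZ^\top+\kappa\sigma^2I\big)^{-1}\Big).$$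
   Context: $\mathcal P(A;\Sigma):=\frac1d\|\Sigma^{1/2}(AX-I)\|_F^2+\sigma^2\|\Sigma^{1/2}A\|_F^2$, $\mathcal T(A;\Sigma):=\frac1{nd}\|XAX-X\|_F^2+\frac{\sigma^2}{n}\|XA-I\|_F^2$, and $A(\rho,\Sigma):=\big(I-\rho\sigma^2(\Sigma-\frac\rho dX^\top X)^{-1}\big)(X^\top X+d\sigma^2I)^{-1}X^\top$, defined when $\Sigma-\frac\rho dX^\top X\succ0$ (equivalently $I-\frac\rho dZ^\top Z\succ0$). *)

(* Defs.v *)
From HB Require Import structures.
From mathcomp Require Import all_boot all_order all_algebra.
From mathcomp Require Import reals.
Set Implicit Arguments. Unset Strict Implicit. Unset Printing Implicit Defensive.
Import Order.TTheory GRing.Theory Num.Theory.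
Local Open Scope ring_scope.

Definition frob2 {R : realType} (m n : nat) (M : 'M[R]_(m, n)) : R :=
  \sum_(i < m) \sum_(j < n) M i j ^+ 2.

Definition psd {R : realType} (n : nat) (M : 'M[R]_n) : Prop :=
  M^T = M /\ forall v : 'rV[R]_n, 0 <= (v *m M *m v^T) 0 0.
Definition posdef {R : realType} (n : nat) (M : 'M[R]_n) : Prop :=
  M^T = M /\ forall v : 'rV[R]_n, v != 0 -> 0 < (v *m M *m v^T) 0 0.

Definition is_sqrtm {R : realType} (n : nat) (S Sigma : 'M[R]_n) : Prop :=
  psd S /\ S *m S = Sigma.

(* P(A; Sigma), with Sh = Sigma^{1/2}, X = Z Sigma^{1/2} *)
Definition Pcal {R : realType} (n d : nat) (Z : 'M[R]_(n, d)) (Sh : 'M[R]_d)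
    (sigma : R) (A : 'M[R]_(d, n)) : R :=
  let X := Z *m Sh in
  (d%:R)^-1 * frob2 (Sh *m (A *m X - 1%:M)) + sigma ^+ 2 * frob2 (Sh *m A).

Definition Tcal {R : realType} (n d : nat) (Z : 'M[R]_(n, d)) (Sh : 'M[R]_d)
    (sigma : R) (A : 'M[R]_(d, n)) : R :=
  let X := Z *m Sh in
  (n%:R * d%:R)^-1 * frob2 (X *m A *m X - X)
  + sigma ^+ 2 / n%:R * frob2 (X *m A - 1%:M).

Definition Aopt {R : realType} (n d : nat) (Z : 'M[R]_(n, d)) (Sigma Sh : 'M[R]_d)
    (sigma rho : R) : 'M[R]_(d, n) :=
  let X := Z *m Sh in
  (1%:M - (rho * sigma ^+ 2) *: invmx (Sigma - (rho / d%:R) *: (X^T *m X)))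
    *m invmx (X^T *m X + (d%:R * sigma ^+ 2)%:M) *m X^T.

(* Main.v *)
Require Import Defs.
From HB Require Import structures.
From mathcomp Require Import all_boot all_order all_algebra.
From mathcomp Require Import reals.
From mathcomp Require Import complex sesquilinear spectral ring lra.
Set Implicit Arguments. Unset Strict Implicit. Unset Printing Implicit Defensive.
Import Order.TTheory GRing.Theory Num.Theory.
Local Open Scope ring_scope.



Lemma sym_eig_gram {R : realType} n (A : 'M[R]_n) : A^T = A ->
  (forall a, eigenvalue A a -> 0 <= a) ->
  exists G : 'M[R]_(n, n + n), A = G *m G^T.
Proof.
move=> sA eA.
pose toC := real_complex R.
pose Ac := map_mx toC A.
have hA : Ac \is hermsymmx.
  apply/is_hermitianmxP. idtac. rewrite expr0 scale1r.
  rewrite -matrixP => i j; rewrite !mxE.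
  have -> : A j i = A i j by rewrite -[in RHS]sA mxE.
  rewrite conj_Creal //; apply/complex_realP; by exists (A i j).
have /orthomx_spectralP Aeq := hermitian_normalmx hA.
set P := spectralmx Ac in Aeq.
set D := spectral_diag Ac in Aeq.
have Pu : P \is unitarymx := spectral_unitarymx Ac.
have PU : P \in unitmx := spectral_unit Ac.
have Dreal := hermitian_spectral_diag_real hA.
pose x k := complex.Re (D 0 k).
have Dx k : D 0 k = toC (x k).
  by rewrite /toC /x RRe_real //; move/mxOverP: Dreal; apply.
have x0 k : 0 <= x k.
  apply: eA.
  have : eigenvalue Ac (D 0 k).
    apply/eigenvalueP; exists (row k P).
      have PA : P *m Ac = diag_mx D *m P by rewrite Aeq !mulmxA mulmxV // mul1mx.
      by rewrite -row_mul PA; apply/rowP=> j; rewrite mul_diag_mx !mxE.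
    apply/eqP=> r0.
    have := congr1 (row k) (mulmxV PU).
    rewrite row_mul r0 mul0mx => /rowP/(_ k); rewrite !mxE eqxx /=.
    by move/eqP; rewrite eq_sym oner_eq0.
  rewrite Dx !eigenvalue_root_char.
  by rewrite -map_char_poly fmorph_root.
pose s := \row_k Num.sqrt (x k).
pose Ur := map_mx (@complex.Re R) P.
pose Ui := map_mx (@complex.Im R) P.
exists (row_mx (Ur^T *m diag_mx s) (Ui^T *m diag_mx s)).
rewrite tr_row_mx mul_row_col !trmx_mul !tr_diag_mx !trmxK !mulmxA !mul_mx_diag.
apply/matrixP=> i j.
have E : toC (A i j) = \sum_k (Num.conj (P k i) * toC (x k)) * P k j.
  have -> : toC (A i j) = Ac i j by rewrite mxE.
  rewrite Aeq invmx_unitary // mul_mx_diag !mxE; apply: eq_bigr => k _.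
  by rewrite !mxE Dx.
have ReD : {morph (@complex.Re R) : u v / u + v}.
  by move=> [a b] [c d].
have := congr1 (@complex.Re R) E.
rewrite (big_morph _ ReD (erefl _)) /= => ->.
rewrite !mxE -big_split /=; apply: eq_bigr => k _.
have ss : Num.sqrt (x k) * Num.sqrt (x k) = x k by rewrite -expr2 sqr_sqrtr.
rewrite !mxE -[in LHS]ss.
case: (P k i) => a b; case: (P k j) => c d /=.
ring.
Qed.





Lemma rv_sq {R : realType} n (u : 'rV[R]_n) : (u *m u^T) 0 0 = \sum_j u 0 j ^+ 2.
Proof. by rewrite !mxE; apply: eq_bigr => j _; rewrite !mxE expr2. Qed.

Lemma rv_sq_ge0 {R : realType} n (u : 'rV[R]_n) : 0 <= (u *m u^T) 0 0.
Proof. by rewrite rv_sq sumr_ge0 // => j _; rewrite sqr_ge0. Qed.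

Lemma rv_sq_eq0 {R : realType} n (u : 'rV[R]_n) : (u *m u^T) 0 0 = 0 -> u = 0.
Proof.
rewrite rv_sq => /eqP; rewrite psumr_eq0 => [/allP H|j _]; last exact: sqr_ge0.
apply/rowP => j; rewrite mxE; apply/eqP; rewrite -sqrf_eq0.
by apply: (implyP (H j (mem_index_enum j))).
Qed.

Lemma gram_psd {R : realType} m n (G : 'M[R]_(m, n)) : psd (G *m G^T).
Proof.
split; first by rewrite trmx_mul trmxK.
by move=> v; rewrite mulmxA -(trmxK v) -mulmxA -trmx_mul trmxK rv_sq_ge0.
Qed.

Lemma psd_eig {R : realType} n (A : 'M[R]_n) a : psd A -> eigenvalue A a -> 0 <= a.
Proof.
case=> _ pA /eigenvalueP [v vA vn0].
have := pA v; rewrite vA -scalemxAl mxE.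
have : 0 < (v *m v^T) 0 0.
  rewrite lt0r rv_sq_ge0 andbT; apply/eqP => /rv_sq_eq0 h; by rewrite h eqxx in vn0.
move=> p; rewrite pmulr_lge0 //.
Qed.

Lemma psd_gram {R : realType} n (A : 'M[R]_n) : psd A -> exists G : 'M[R]_(n, n + n), A = G *m G^T.
Proof.
move=> pA; apply: sym_eig_gram; first by case: pA.
by move=> a; apply: psd_eig.
Qed.

Lemma psd_congr {R : realType} m n (B : 'M[R]_(m, n)) C : psd C -> psd (B *m C *m B^T).
Proof.
case=> sC pC; split; first by rewrite !trmx_mul trmxK sC mulmxA.
by move=> v; rewrite !mulmxA -(mulmxA _ B^T) -trmx_mul pC.
Qed.

Lemma psdD {R : realType} n (A B : 'M[R]_n) : psd A -> psd B -> psd (A + B).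
Proof.
case=> sA pA [sB pB]; split; first by rewrite linearD /= sA sB.
by move=> v; rewrite mulmxDr mulmxDl mxE addr_ge0.
Qed.

Lemma psdZ {R : realType} n c (A : 'M[R]_n) : 0 <= c -> psd A -> psd (c *: A).
Proof.
move=> c0 [sA pA]; split; first by rewrite linearZ /= sA.
by move=> v; rewrite -scalemxAr -scalemxAl mxE mulr_ge0.
Qed.

Lemma psd1 {R : realType} n : psd (1%:M : 'M[R]_n).
Proof. by split; [rewrite trmx1 | move=> v; rewrite mulmx1 rv_sq_ge0]. Qed.

Lemma tr_psd {R : realType} n (P Q : 'M[R]_n) : psd P -> psd Q -> 0 <= \tr (P *m Q).
Proof.
move=> /psd_gram [G ->] [_ pQ].
rewrite -mulmxA mxtrace_mulC /mxtrace sumr_ge0 // => j _.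
have -> : (G^T *m Q *m G) j j = (row j G^T *m Q *m (row j G^T)^T) 0 0.
  rewrite -!row_mul !mxE; apply: eq_bigr => k _; rewrite !mxE //.
exact: pQ.
Qed.

Lemma psd_quad_eq0 {R : realType} n (A : 'M[R]_n) (v : 'rV[R]_n) : psd A -> (v *m A *m v^T) 0 0 = 0 -> v *m A = 0.
Proof.
move=> /psd_gram [G ->] h.
have : ((v *m G) *m (v *m G)^T) 0 0 = 0 by rewrite trmx_mul mulmxA -(mulmxA v G).
by move/rv_sq_eq0; rewrite mulmxA => ->; rewrite mul0mx.
Qed.

Lemma unitmx_ker {R : realType} n (M : 'M[R]_n) : (forall v : 'rV_n, v *m M = 0 -> v = 0) -> M \in unitmx.
Proof.
move=> H; rewrite -row_free_unit -kermx_eq0; apply/eqP/row_matrixP => i.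
rewrite row0; apply: H; apply/sub_kermxP; exact: row_sub.
Qed.

Lemma psd_shift_unit {R : realType} n (P : 'M[R]_n) c : psd P -> 0 < c -> P + c%:M \in unitmx.
Proof.
move=> [_ pP] c0; apply: unitmx_ker => v h.
have : (v *m (P + c%:M) *m v^T) 0 0 = 0 by rewrite h mul0mx mxE.
rewrite mulmxDr mulmxDl mul_mx_scalar -scalemxAl mxE [X in _ + X]mxE.
move=> e; apply: rv_sq_eq0; apply/eqP; move/eqP: e.
rewrite paddr_eq0 ?pP ?mulr_ge0 ?rv_sq_ge0 ?ltW // mulf_eq0 => /andP[_ /orP[]] //.
by rewrite gt_eqF.
Qed.

Lemma posdef_unit {R : realType} n (K : 'M[R]_n) : posdef K -> K \in unitmx.
Proof.
move=> [_ pK]; apply: unitmx_ker => v h; apply/eqP/negPn/negP => /pK.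
by rewrite h mul0mx mxE ltxx.
Qed.

Lemma posdef_psd {R : realType} n (K : 'M[R]_n) : posdef K -> psd K.
Proof.
move=> [sK pK]; split => // v; have [->|vn0] := eqVneq v 0.
  by rewrite !mul0mx mxE.
exact/ltW/pK.
Qed.

Lemma psd_inv {R : realType} n (H : 'M[R]_n) : psd H -> H \in unitmx -> psd (invmx H).
Proof.
move=> pH Hu; have [sH _] := pH.
have -> : invmx H = invmx H *m H *m (invmx H)^T.
  by rewrite trmx_inv sH mulVmx // mul1mx.
exact: psd_congr.
Qed.

Lemma psd_inv_anti {R : realType} n (H H' : 'M[R]_n) : psd H -> H \in unitmx -> psd H' -> H' \in unitmx ->
  psd (H' - H) -> psd (invmx H - invmx H').
Proof.
move=> pH Hu pH' H'u pD.
have [sH' _] := pH'; have [sD _] := pD.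
set D := H' - H in pD sD *.
have e1 : D + D *m invmx H *m D = D *m invmx H *m H'.
  have -> : H' = H + D by rewrite /D addrC subrK.
  by rewrite [in RHS]mulmxDr mulmxKV.
have -> : invmx H - invmx H' = invmx H' *m (D + D *m invmx H *m D) *m (invmx H')^T.
  rewrite trmx_inv sH' e1 !mulmxA mulmxK // /D mulmxBr mulmxBl mulVmx // mul1mx.
  by rewrite mulmxK.
apply: psd_congr; apply: psdD => //.
by rewrite -{2}sD; apply: psd_congr; apply: psd_inv.
Qed.

Lemma psd_of_eig {R : realType} n (A : 'M[R]_n) : A^T = A -> (forall a, eigenvalue A a -> 0 <= a) -> psd A.
Proof. by move=> sA eA; have [G ->] := sym_eig_gram sA eA; apply: gram_psd. Qed.

Lemma eig_loewner {R : realType} n (S : 'M[R]_n) lo hi : S^T = S ->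
  (forall a, eigenvalue S a -> lo <= a <= hi) ->
  psd (S - lo%:M) /\ psd (hi%:M - S).
Proof.
move=> sS eS; split; (apply: psd_of_eig; first by rewrite linearB /= sS tr_scalar_mx).
  move=> b /eigenvalueP [v vA vn0].
  have : eigenvalue S (b + lo).
    apply/eigenvalueP; exists v => //.
    by move: vA; rewrite mulmxBr mul_mx_scalar scalerDl => /eqP; rewrite subr_eq => /eqP.
  by move/eS => /andP[h _]; move: h; rewrite lerDr.
move=> b /eigenvalueP [v vA vn0].
have : eigenvalue S (hi - b).
  apply/eigenvalueP; exists v => //.
  by rewrite scalerBl -vA mulmxBr mul_mx_scalar opprB addrC subrK.
by move/eS => /andP[_ h]; move: h; rewrite gerDl oppr_le0.
Qed.



Lemma frob2_tr {R : realType} m n (M : 'M[R]_(m,n)) : frob2 M = \tr (M *m M^T).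
Proof.
rewrite /frob2 /mxtrace; apply: eq_bigr => i _; rewrite !mxE.
by apply: eq_bigr => j _; rewrite !mxE expr2.
Qed.

Lemma frob2D {R : realType} m n (P Q : 'M[R]_(m,n)) :
  frob2 (P + Q) = frob2 P + 2 * \tr (Q *m P^T) + frob2 Q.
Proof.
rewrite !frob2_tr linearD /= mulmxDl !mulmxDr !mxtraceD.
rewrite -[\tr (P *m Q^T)]mxtrace_tr trmx_mul trmxK; ring.
Qed.

Lemma Pquad {R : realType} n d (Z : 'M[R]_(n,d)) Sh sigma (A A0 : 'M[R]_(d,n)) :
  (0 < d)%N ->
  A0 *m (Z *m Sh *m (Z *m Sh)^T + (d%:R * sigma^+2)%:M) = (Z *m Sh)^T ->
  Pcal Z Sh sigma A - Pcal Z Sh sigma A0 =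
  d%:R^-1 * \tr ((Sh *m (A - A0)) *m (Z *m Sh *m (Z *m Sh)^T + (d%:R * sigma^+2)%:M)
                  *m (Sh *m (A - A0))^T).
Proof.
move=> d0 hA0; rewrite /Pcal.
set X := Z *m Sh in hA0 *.
set c := d%:R * sigma ^+ 2 in hA0 *.
set Y := Sh *m (A - A0).
have e1 : Sh *m (A *m X - 1%:M) = Sh *m (A0 *m X - 1%:M) + Y *m X.
  by rewrite /Y -mulmxA -mulmxDr; congr (Sh *m _); rewrite mulmxBl [RHS]addrC [RHS]addrA subrK.
have e2 : Sh *m A = Sh *m A0 + Y by rewrite /Y mulmxBr addrC subrK.
rewrite e1 e2 !frob2D.
have key : X *m (Sh *m (A0 *m X - 1%:M))^T = - c *: (Sh *m A0)^T.
  apply/eqP; rewrite -subr_eq0 scaleNr opprK !trmx_mul (mulmxA X) scalemxAl -mulmxDl.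
  suff -> : X *m (A0 *m X - 1%:M)^T + c *: A0^T = 0 by rewrite mul0mx.
  have hX : X *m X^T *m A0^T + c *: A0^T = X.
    have := congr1 trmx hA0; rewrite trmxK trmx_mul linearD /= tr_scalar_mx trmx_mul trmxK.
    by rewrite mulmxDl mul_scalar_mx.
  by rewrite linearB /= trmx_mul trmx1 mulmxBr mulmx1 mulmxA addrAC hX subrr.
have ht : \tr (Y *m X *m (Sh *m (A0 *m X - 1%:M))^T) = - c * \tr (Y *m (Sh *m A0)^T).
  by rewrite -mulmxA key -scalemxAr mxtraceZ.
have e3 : \tr (Y *m X *m (Y *m X)^T) = \tr (Y *m (X *m X^T) *m Y^T).
  by rewrite trmx_mul !mulmxA.
have e4 : \tr (Y *m (X *m X^T + c%:M) *m Y^T) =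
    \tr (Y *m (X *m X^T) *m Y^T) + c * \tr (Y *m Y^T).
  by rewrite mulmxDr mulmxDl mxtraceD mul_mx_scalar -scalemxAl mxtraceZ.
rewrite ht !frob2_tr e3 e4 /c.
have dn0 : d%:R != 0 :> R by rewrite pnatr_eq0 -lt0n.
by field.
Qed.

Lemma Tquad {R : realType} n d (Z : 'M[R]_(n,d)) Sh sigma (A : 'M[R]_(d,n)) :
  (0 < d)%N ->
  Tcal Z Sh sigma A = (n%:R * d%:R)^-1 *
    \tr ((Z *m Sh *m A - 1%:M) *m (Z *m Sh *m (Z *m Sh)^T + (d%:R * sigma^+2)%:M)
         *m (Z *m Sh *m A - 1%:M)^T).
Proof.
move=> d0; rewrite /Tcal.
set X := Z *m Sh.
set B := X *m A - 1%:M.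
have -> : X *m A *m X - X = B *m X by rewrite /B mulmxBl mul1mx.
rewrite !frob2_tr.
have -> : \tr (B *m X *m (B *m X)^T) = \tr (B *m (X *m X^T) *m B^T).
  by rewrite trmx_mul !mulmxA.
rewrite mulmxDr mulmxDl mxtraceD mul_mx_scalar -scalemxAl mxtraceZ.
have dn0 : d%:R != 0 :> R by rewrite pnatr_eq0 -lt0n.
rewrite invfM; set u := n%:R^-1.
by field.
Qed.

Lemma invmxM' {R : realType} n (A B : 'M[R]_n) : A \in unitmx -> B \in unitmx ->
  invmx (A *m B) = invmx B *m invmx A.
Proof.
move=> uA uB; have uAB : A *m B \in unitmx by rewrite unitmx_mul uA uB.
have h : invmx B *m invmx A *m (A *m B) = 1%:M by rewrite !mulmxA mulmxKV // mulVmx.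
by rewrite -[invmx (A *m B)]mul1mx -h mulmxK.
Qed.

Lemma Aform {R : realType} n d (Z : 'M[R]_(n,d)) Sigma Sh sigma rho :
  Sh \in unitmx -> Sh^T = Sh -> Sh *m Sh = Sigma ->
  (1%:M - (rho / d%:R) *: (Z^T *m Z)) \in unitmx ->
  (1%:M - rho *: (d%:R^-1 *: (Z *m Z^T))) \in unitmx ->
  (Z *m Sh *m (Z *m Sh)^T + (d%:R * sigma^+2)%:M) \in unitmx ->
  ((Z *m Sh)^T *m (Z *m Sh) + (d%:R * sigma^+2)%:M) \in unitmx ->
  Aopt Z Sigma Sh sigma rho =
    (Z *m Sh)^T *m invmx (Z *m Sh *m (Z *m Sh)^T + (d%:R * sigma^+2)%:M)
    - (rho * sigma ^+ 2) *: (invmx Sh *m Z^T *m invmx (1%:M - rho *: (d%:R^-1 *: (Z *m Z^T)))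
         *m invmx (Z *m Sh *m (Z *m Sh)^T + (d%:R * sigma^+2)%:M)).
Proof.
move=> uS sS eSig uK uL uH uG; rewrite /Aopt.
set X := Z *m Sh.
set c := d%:R * sigma ^+ 2.
set H := X *m X^T + c%:M in uH *.
set G := X^T *m X + c%:M in uG *.
set K := 1%:M - (rho / d%:R) *: (Z^T *m Z) in uK *.
set L := 1%:M - rho *: (d%:R^-1 *: (Z *m Z^T)) in uL *.
have hGH : X^T *m H = G *m X^T.
  by rewrite /H /G mulmxDr mulmxDl !mulmxA mul_mx_scalar mul_scalar_mx.
have ei : invmx G *m X^T = X^T *m invmx H.
  rewrite -[LHS](mulmxK uH) -(mulmxA (invmx G)) hGH mulmxA mulVmx // mul1mx //.
have eXt : X^T = Sh *m Z^T by rewrite /X trmx_mul sS.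
have eii : Sigma - (rho / d%:R) *: (X^T *m X) = Sh *m K *m Sh.
  rewrite /K mulmxBr mulmx1 mulmxBl -eSig; congr (_ - _).
  by rewrite -scalemxAr -scalemxAl eXt /X !mulmxA.
have eiii : invmx K *m Z^T = Z^T *m invmx L.
  have hKL : Z^T *m L = K *m Z^T.
    rewrite /L /K mulmxBr mulmx1 mulmxBl mul1mx; congr (_ - _).
    by rewrite -!scalemxAr -scalemxAl scalerA mulrC !mulmxA.
  by rewrite -[LHS](mulmxK uL) -(mulmxA (invmx K)) hKL mulmxA mulVmx // mul1mx.
rewrite eii invmxM' ?unitmx_mul ?uS ?uK // invmxM' // -mulmxA ei.
rewrite mulmxBl mul1mx -scalemxAl; congr (_ - _ *: _).
rewrite eXt !mulmxA mulmxKV // -(mulmxA (invmx Sh) (invmx K)) eiii !mulmxA //.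
Qed.

Lemma frob2_0l {R : realType} n (M : 'M[R]_(0, n)) : frob2 M = 0.
Proof. by rewrite /frob2 big_ord0. Qed.
Lemma mxtrace0 {R : realType} (M : 'M[R]_0) : \tr M = 0.
Proof. by rewrite /mxtrace big_ord0. Qed.

Lemma Pcal0 {R : realType} n (Z : 'M[R]_(n, 0)) Sh sigma A : Pcal Z Sh sigma A = 0.
Proof. by rewrite /Pcal /frob2 !big_ord0 !mulr0 addr0. Qed.
Lemma Tcal0 {R : realType} (Z : 'M[R]_(0, 0)) Sh sigma A : Tcal Z Sh sigma A = 0.
Proof. by rewrite /Tcal /frob2 !big_ord0 !mulr0 addr0. Qed.

Unset Implicit Arguments.

Theorem lemma7 (R : realType) (n d : nat) (Z : 'M[R]_(n, d))
    (Sigma Sh : 'M[R]_d) (kappa sigma rho : R) :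
  (n <= d)%N ->
  Z *m Z^T \in unitmx ->
  Sigma^T = Sigma ->
  1 <= kappa ->
  (forall a : R, eigenvalue Sigma a -> kappa^-1 <= a <= 1) ->
  is_sqrtm Sh Sigma ->
  0 < sigma ->
  0 <= rho ->
  posdef (1%:M - (rho / d%:R) *: (Z^T *m Z)) ->
  let W := (d%:R)^-1 *: (Z *m Z^T) in
  let Minv := invmx (1%:M - rho *: W) in
  Pcal Z Sh sigma (Aopt Z Sigma Sh sigma rho) - Pcal Z Sh sigma (Aopt Z Sigma Sh sigma 0)
    >= rho ^+ 2 * sigma ^+ 4 / d%:R
       * \tr (Minv *m Minv *m W *m invmx (W + (sigma ^+ 2)%:M))
  /\
  Tcal Z Sh sigma (Aopt Z Sigma Sh sigma rho) - Tcal Z Sh sigma (Aopt Z Sigma Sh sigma 0)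
    <= kappa * sigma ^+ 4 / n%:R
       * \tr ((Minv *m Minv - 1%:M) *m invmx (W + (kappa * sigma ^+ 2)%:M)).
Proof.
move=> hnd hZu sSig hk heig [pSh eSh] hs hr hK W Minv.
case: (posnP d) => [d0|dpos].
  subst d; move: hnd; rewrite leqn0 => /eqP n0; subst n.
  by rewrite !Pcal0 !Tcal0 !mxtrace0 !mulr0 subrr.
have sS : Sh^T = Sh by case: pSh.
have dn0 : d%:R != 0 :> R by rewrite pnatr_eq0 -lt0n.
have dgt0 : 0 < d%:R :> R by rewrite ltr0n.
have kpos : 0 < kappa := lt_le_trans ltr01 hk.
have kn0 : kappa != 0 by rewrite gt_eqF.
have [pSlo pShi] := eig_loewner sSig heig.
have uSig : Sigma \in unitmx.
  apply: unitmx_ker => v hv; apply/eqP/negPn/negP => vn0.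
  have : eigenvalue Sigma 0 by apply/eigenvalueP; exists v => //; rewrite hv scale0r.
  by move/heig => /andP[h _]; move: h; rewrite leNgt invr_gt0 kpos.
have uS : Sh \in unitmx by move: uSig; rewrite -eSh unitmx_mul => /andP[].
set X := Z *m Sh.
set c := d%:R * sigma ^+ 2.
have c0 : 0 < c by rewrite mulr_gt0 // exprn_gt0.
set N := Z *m Z^T.
have pN : psd N := gram_psd Z.
have eXX : X *m X^T = Z *m Sigma *m Z^T by rewrite /X trmx_mul sS -eSh !mulmxA.
have pcI : forall m, psd (c%:M : 'M[R]_m).
  by move=> m; rewrite -scalemx1; apply: psdZ; [exact: ltW | exact: psd1].
set H := X *m X^T + c%:M.
have pH : psd H := psdD (gram_psd X) (pcI n).
have uH : H \in unitmx := psd_shift_unit (gram_psd X) c0.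
have sH : H^T = H by case: pH.
have uG : X^T *m X + c%:M \in unitmx.
  by apply: psd_shift_unit c0; have := gram_psd X^T; rewrite trmxK.
set H1 := N + c%:M.
have pH1 : psd H1 := psdD pN (pcI n).
have uH1 : H1 \in unitmx := psd_shift_unit pN c0.
set H2 := kappa^-1 *: N + c%:M.
have pkN : psd (kappa^-1 *: N) by apply: psdZ => //; rewrite invr_ge0 ltW.
have pH2 : psd H2 := psdD pkN (pcI n).
have uH2 : H2 \in unitmx := psd_shift_unit pkN c0.
set K := 1%:M - (rho / d%:R) *: (Z^T *m Z) in hK *.
have uK : K \in unitmx := posdef_unit hK.
have pK : psd K := posdef_psd hK.
have sK : K^T = K by case: pK.
set L := 1%:M - rho *: W.
have LZ : L *m Z = Z *m K.
  rewrite /L /K /W mulmxBl mul1mx mulmxBr mulmx1; congr (_ - _).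
  by rewrite -!scalemxAl -scalemxAr scalerA !mulmxA.
have uL : L \in unitmx.
  apply: unitmx_ker => v hv.
  have hvZ : v *m Z = 0.
    have : v *m L *m Z = 0 by rewrite hv mul0mx.
    rewrite -mulmxA LZ mulmxA => h.
    by rewrite -[v *m Z](mulmxK uK) h mul0mx.
  have : v *m L = v.
    by rewrite /L /W mulmxBr mulmx1 -!scalemxAr mulmxA hvZ mul0mx !scaler0 subr0.
  by rewrite hv => <-.
have sW : W^T = W by rewrite /W linearZ /= /N trmx_mul trmxK.
have sL : L^T = L by rewrite /L linearB /= linearZ /= sW trmx1.
have sM : Minv^T = Minv by rewrite /Minv trmx_inv sL.
have MZ : Minv *m Z = Z *m invmx K.
  by rewrite -[Minv *m Z](mulmxK uK) -(mulmxA Minv Z K) -LZ mulmxA mulVmx // mul1mx.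
have ZtM : Z^T *m Minv = invmx K *m Z^T.
  by have := congr1 trmx MZ; rewrite !trmx_mul sM trmx_inv sK.
have eNM : N *m Minv = Z *m invmx K *m Z^T by rewrite /N -mulmxA ZtM mulmxA.
have eM1 : Minv - 1%:M = (rho / d%:R) *: (Z *m invmx K *m Z^T).
  have e : L *m Minv = 1%:M := mulmxV uL.
  move: e; rewrite /L mulmxBl mul1mx => e.
  rewrite -[X in _ - X = _]e opprB addrC subrK -scalemxAl /W -scalemxAl scalerA -/N; congr (_ *: _); exact: eNM.
have pM1 : psd (Minv - 1%:M).
  rewrite eM1; apply: psdZ; first by rewrite divr_ge0.
  by apply: psd_congr; apply: psd_inv.
have pMM : psd (Minv *m Minv - 1%:M).
  have sM1 : (Minv - 1%:M)^T = Minv - 1%:M by case: pM1.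
  have -> : Minv *m Minv - 1%:M =
      (Minv - 1%:M) *m 1%:M *m (Minv - 1%:M)^T + (Minv - 1%:M) + (Minv - 1%:M).
    rewrite mulmx1 sM1 mulmxBr mulmx1 mulmxBl mul1mx.
    by rewrite subrK addrA subrK.
  by apply: psdD => //; apply: psdD => //; apply: psd_congr; apply: psd1.
have commN : Minv *m N = N *m Minv.
  have LN : L *m N = N *m L.
    rewrite /L /W mulmxBl mulmxBr mul1mx mulmx1; congr (_ - _).
    by rewrite -!scalemxAl -!scalemxAr -/N.
  by rewrite -[Minv *m N](mulmxK uL) -(mulmxA Minv N L) -LN mulmxA mulVmx // mul1mx.
have uL0 : (1%:M - 0 *: (d%:R^-1 *: (Z *m Z^T)) : 'M[R]_n) \in unitmx.
  by rewrite scale0r subr0 unitmx1.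
have uK0 : (1%:M - (0 / d%:R) *: (Z^T *m Z) : 'M[R]_d) \in unitmx.
  by rewrite mul0r scale0r subr0 unitmx1.
have eAr := Aform (rho:=rho) uS sS eSh uK uL uH uG.
have eA0 : Aopt Z Sigma Sh sigma 0 = X^T *m invmx H.
  by rewrite (Aform (rho:=0) uS sS eSh uK0 uL0 uH uG) mul0r !scale0r !subr0.
split.
  have hA0 : Aopt Z Sigma Sh sigma 0 *m H = X^T by rewrite eA0 mulmxKV.
  rewrite (Pquad _ dpos hA0).
  have eY : Sh *m (Aopt Z Sigma Sh sigma rho - Aopt Z Sigma Sh sigma 0) =
      - (rho * sigma ^+ 2) *: (Z^T *m Minv *m invmx H).
    rewrite eAr eA0 addrAC subrr add0r mulmxN -scalemxAr !mulmxA mulmxV // mul1mx scaleNr.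
    done.
  rewrite eY -/X -/c -/H.
  set s := rho * sigma ^+ 2.
  set Q := Z^T *m Minv *m invmx H.
  have eQ : Q *m H *m Q^T = Z^T *m (Minv *m invmx H *m Minv) *m Z.
    by rewrite /Q mulmxKV // !trmx_mul trmx_inv sH sM trmxK !mulmxA.
  have trQ : \tr (Q *m H *m Q^T) = \tr (Minv *m N *m Minv *m invmx H).
    by rewrite eQ mxtrace_mulC !mulmxA -/N mxtrace_mulC !mulmxA.
  have eR : \tr ((- s *: Q) *m H *m (- s *: Q)^T) = s ^+ 2 * \tr (Q *m H *m Q^T).
    by rewrite [(- s *: Q)^T]linearZ /= -!scalemxAl -!scalemxAr !mxtraceZ mulrA mulrNN -expr2.
  rewrite eR trQ.
  have eW1 : W + (sigma^+2)%:M = d%:R^-1 *: H1.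
    by rewrite /W /H1 scalerDr scale_scalar_mx /c mulKf.
  have uW1 : (d%:R^-1 : R) \is a GRing.unit by rewrite unitfE invr_eq0.
  have eL : \tr (Minv *m Minv *m W *m invmx (W + (sigma ^+ 2)%:M)) =
      \tr (Minv *m N *m Minv *m invmx H1).
    rewrite eW1 invmxZ ?unitmxZ // invrK /W -!scalemxAr -!scalemxAl scalerA mulfV // scale1r.
    by rewrite -(mulmxA Minv Minv) -/N [in LHS]commN /N !mulmxA.
  rewrite eL.
  have pP : psd (Minv *m N *m Minv).
    suff -> : Minv *m N *m Minv = Minv *m Z *m (Minv *m Z)^T by apply: gram_psd.
    by rewrite trmx_mul sM /N !mulmxA.
  have pD : psd (H1 - H).
    suff -> : H1 - H = Z *m (1%:M - Sigma) *m Z^T by apply: psd_congr.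
    by rewrite /H1 /H eXX opprD addrACA subrr addr0 mulmxBr mulmx1 mulmxBl.
  have hdiff : 0 <= \tr (Minv *m N *m Minv *m invmx H) - \tr (Minv *m N *m Minv *m invmx H1).
    rewrite -linearB /= -mulmxBr; apply: tr_psd => //.
    exact: psd_inv_anti.
  rewrite -subr_ge0.
  set tH := \tr (Minv *m N *m Minv *m invmx H) in hdiff *.
  set tH1 := \tr (Minv *m N *m Minv *m invmx H1) in hdiff *.
  have -> : d%:R^-1 * (s ^+ 2 * tH) - rho ^+ 2 * sigma ^+ 4 / d%:R * tH1 =
      (rho ^+ 2 * sigma ^+ 4 / d%:R) * (tH - tH1) by rewrite /s; ring.
  by apply: mulr_ge0 => //; apply: divr_ge0 => //; apply: mulr_ge0; apply: exprn_ge0 => //; apply: ltW.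
rewrite !Tquad // -/X -/c -/H.
have eXXH : X *m X^T = H - c%:M by rewrite /H addrK.
set s := rho * sigma ^+ 2.
have es : s *: (N *m Minv) = c *: (Minv - 1%:M).
  rewrite eM1 eNM scalerA /s /c; congr (_ *: _); by field.
have eBr : X *m Aopt Z Sigma Sh sigma rho - 1%:M = - c *: (Minv *m invmx H).
  rewrite eAr -/X -/c -/H -/W -/Minv -/s mulmxBr mulmxA eXXH mulmxBl mulmxV // mul_scalar_mx.
  rewrite -scalemxAr /X !mulmxA mulmxK // -/N scalemxAl es.
  by rewrite -scalemxAl mulmxBl mul1mx scalerBr opprB addrA subrK addrAC subrr add0r scaleNr.
have eB0 : X *m Aopt Z Sigma Sh sigma 0 - 1%:M = - c *: (1%:M *m invmx H).
  by rewrite eA0 mulmxA eXXH mulmxBl mulmxV // !mul_scalar_mx scale1r addrAC subrr add0r scaleNr.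
rewrite eBr eB0.
have trB : forall P : 'M[R]_n, P^T = P ->
    \tr ((- c *: (P *m invmx H)) *m H *m (- c *: (P *m invmx H))^T) =
    c ^+ 2 * \tr (P *m P *m invmx H).
  move=> P sP; rewrite [(- c *: _)^T]linearZ /= -!scalemxAl -!scalemxAr !mxtraceZ mulrA mulrNN -expr2.
  congr (_ * _).
  by rewrite trmx_mul trmx_inv sH sP mulmxKV // mulmxA mxtrace_mulC mulmxA.
rewrite !trB ?trmx1 // !mul1mx.
have eW2 : W + (kappa * sigma^+2)%:M = (kappa / d%:R) *: H2.
  rewrite /W /H2 scalerDr scalerA scale_scalar_mx /c -/N.
  by congr (_ *: _ + _%:M); field; rewrite ?kn0 ?dn0.
have uk2 : (kappa / d%:R : R) \is a GRing.unit by rewrite unitfE mulf_neq0 // invr_eq0.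
rewrite eW2 invmxZ ?unitmxZ // -scalemxAr mxtraceZ.
have pD2 : psd (H - H2).
  suff -> : H - H2 = Z *m (Sigma - kappa^-1%:M) *m Z^T by apply: psd_congr.
  rewrite /H /H2 eXX opprD addrACA subrr addr0 mulmxBr mulmxBl mul_mx_scalar -scalemxAl.
  by [].
have hdiff : 0 <= \tr ((Minv *m Minv - 1%:M) *m invmx H2) - \tr ((Minv *m Minv - 1%:M) *m invmx H).
  rewrite -linearB /= -mulmxBr; apply: tr_psd => //.
  exact: psd_inv_anti.
move: hdiff; rewrite [in X in _ - X]mulmxBl mul1mx linearB /=.
set tB := \tr ((Minv *m Minv - 1%:M) *m invmx H2).
set tA := \tr (Minv *m Minv *m invmx H).
set t1 := \tr (invmx H).
move=> hdiff; rewrite -subr_ge0.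
have -> : kappa * sigma ^+ 4 / n%:R * ((kappa / d%:R)^-1 * tB) -
    ((n%:R * d%:R)^-1 * (c ^+ 2 * tA) - (n%:R * d%:R)^-1 * (c ^+ 2 * t1)) =
    (n%:R^-1 * d%:R * sigma ^+ 4) * (tB - (tA - t1)).
  by rewrite !invfM /c; set u := n%:R^-1; field; rewrite ?kn0 ?dn0.
apply: mulr_ge0 => //; apply: mulr_ge0; last by apply: exprn_ge0; apply: ltW.
by apply: mulr_ge0; [rewrite invr_ge0 ler0n | apply: ltW].
Qed.
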